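(* Let $q$ be a prime power, $0<r\leq m$, $g_1,\dots,g_r\in\mathbb{F}_{q^m}$, and let $\mathcal{A}\subseteq\langle g_1,\dots,g_r\rangle_{\mathbb{F}_q}$ be a subset containing an $\mathbb{F}_q$-linear subspace of dimension at least $d$, where $d\leq r$. Let $t\ge 1$ and let $(e_1,\dots,e_t)$ be drawn uniformly at random among $t$-tuples of $\mathbb{F}_q$-linearly independent elements of $\mathbb{F}_{q^m}$. Then the probability that there exists $\mathbf{a}=(a_1,\dots,a_t)\in\mathcal{A}^t\setminus\{\mathbf{0}\}$ with $\sum_{j=1}^t a_je_j=0$ is at most \[ \frac{q^{tr+1}-(q^d-1)(q^t-1)}{q^{m+1}-q^t}. \]
   Context: $\langle g_1,\dots,g_r\rangle_{\mathbb{F}_q}$ denotes the $\mathbb{F}_q$-linear span of $g_1,\dots,g_r$ in $\mathbb{F}_{q^m}$. *)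

(* Defs.v *)
From HB Require Import structures.
From mathcomp Require Import all_boot all_order all_algebra all_field.
Set Implicit Arguments. Unset Strict Implicit. Unset Printing Implicit Defensive.
Import Order.TTheory GRing.Theory Num.Theory.
Local Open Scope ring_scope.

(* Setting: F = F_q a finite field, L = F_{q^m} a finite-dimensional field
   extension of F (m = \dim {:L}); [finvect_type L] is L with its canonical
   finType structure, so that tuples over it can be counted. *)

Definition indep_tuples (F : finFieldType) (L : fieldExtType F) (t : nat)
  : {set t.-tuple (finvect_type L)} :=
  [set e : t.-tuple (finvect_type L) | free e].

Definition bad_event (F : finFieldType) (L : fieldExtType F) (t : nat)
  (A : {set finvect_type L}) (e : t.-tuple (finvect_type L)) : bool :=
  [exists a : t.-tuple (finvect_type L),
     [&& all (fun x => x \in A) a, a != [tuple of nseq t 0]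
       & \sum_(j < t) tnth a j * tnth e j == 0]].

Definition bad_prob (F : finFieldType) (L : fieldExtType F) (t : nat)
  (A : {set finvect_type L}) : rat :=
  (#|[set e in indep_tuples L t | bad_event A e]|%:R / #|indep_tuples L t|%:R)%R.

(* Main.v *)
Require Import Defs.
From HB Require Import structures.
From mathcomp Require Import all_boot all_order all_algebra all_field.
From mathcomp Require Import lra.
Import Order.TTheory GRing.Theory Num.Theory.
Local Open Scope ring_scope.
Set Implicit Arguments. Unset Strict Implicit. Unset Printing Implicit Defensive.

Section Helpers.
Variables (F : finFieldType) (L : fieldExtType F).
Local Notation LT := (finvect_type L).

Definition upd t (e : t.-tuple LT) (i : 'I_t) (x : LT) : t.-tuple LT :=
  [tuple if j == i then x else tnth e j | j < t].
Definition rest t (e : t.-tuple LT) (i : 'I_t) : seq LT :=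
  [seq tnth e j | j <- rem i (enum 'I_t)].

Lemma perm_rest t (e : t.-tuple LT) i : perm_eq e (tnth e i :: rest e i).
Proof.
rewrite -{1}(map_tnth_enum e) /rest -map_cons.
by apply: perm_map; apply: perm_to_rem; rewrite mem_enum.
Qed.

Lemma free_rest t (e : t.-tuple LT) i :
  free e = (tnth e i \notin <<rest e i>>%VS) && free (rest e i).
Proof. by rewrite (perm_free (perm_rest e i)) free_cons. Qed.

Lemma tnth_upd t (e : t.-tuple LT) i x j :
  tnth (upd e i x) j = if j == i then x else tnth e j.
Proof. by rewrite tnth_mktuple. Qed.

Lemma rest_upd t (e : t.-tuple LT) i x : rest (upd e i x) i = rest e i.
Proof.
apply/eq_in_map => j; rewrite mem_rem_uniq ?enum_uniq // inE => /andP[ji _].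
by rewrite tnth_upd (negPf ji).
Qed.

Lemma size_rest t (e : t.-tuple LT) i : size (rest e i) = t.-1.
Proof. by rewrite size_map size_rem ?mem_enum // size_enum_ord. Qed.

Lemma card_LT : #|LT| = (#|F| ^ \dim {:LT})%N.
Proof. by rewrite -card_vspace card_vspacef. Qed.

Lemma card_Y t (e : t.-tuple LT) i : free e ->
  #|[set y : LT | free (upd e i y)]| = (#|F| ^ \dim {:LT} - #|F| ^ t.-1)%N.
Proof.
rewrite (free_rest e i) => /andP[_ fr].
have -> : [set y : LT | free (upd e i y)] = ~: [set y : LT | y \in <<rest e i>>%VS].
  apply/setP => y; rewrite !inE (free_rest _ i) rest_upd tnth_upd eqxx fr andbT //.
have hA : #|[set y : LT | y \in <<rest e i>>%VS]| = (#|F| ^ t.-1)%N.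
  by rewrite cardsE card_vspace; move/eqP: fr => ->; rewrite size_rest.
by rewrite -card_LT -(cardsC [set y : LT | y \in <<rest e i>>%VS]) hA addKn.
Qed.

Definition Bset t (a : t.-tuple LT) : {set t.-tuple LT} :=
  [set e in indep_tuples L t | \sum_(j < t) tnth a j * tnth e j == 0].

Lemma card_B t (a : t.-tuple LT) i : tnth a i != 0 ->
  (#|Bset a| * (#|F| ^ \dim {:LT} - #|F| ^ t.-1) <= #|indep_tuples L t|)%N.
Proof.
move=> ai0.
pose D := [set p : t.-tuple LT * LT | (p.1 \in Bset a) && (upd p.1 i p.2 \in indep_tuples L t)].
have cD : #|D| = (#|Bset a| * (#|F| ^ \dim {:LT} - #|F| ^ t.-1))%N.
  rewrite -sum_nat_const.
  transitivity (\sum_(e in Bset a) #|[set y : LT | free (upd e i y)]|)%N; last first.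
    apply: eq_bigr => e; rewrite !inE => /andP[fe _]; exact: card_Y.
  have -> : #|D| = (\sum_(p in D) 1)%N by rewrite sum1_card.
  rewrite (eq_bigr (fun e => \sum_(y in [set y : LT | free (upd e i y)]) 1)%N); last by move=> e _; rewrite sum1_card.
  rewrite pair_big_dep /=; apply: eq_bigl => -[e y] /=.
  by rewrite !inE.
have inj : {in D &, injective (fun p : t.-tuple LT * LT => upd p.1 i p.2)}.
  move=> [e y] [e' y']; rewrite !inE /= => /andP[/andP[_ se] _] /andP[/andP[_ se'] _] E.
  have yy : y = y'.
    by have := congr1 (fun u => tnth u i) E; rewrite /= !tnth_upd eqxx.
  have off : forall j, j != i -> tnth e j = tnth e' j.
    move=> j ji; have := congr1 (fun u => tnth u j) E.
    by rewrite /= !tnth_upd (negPf ji).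
  have ei : tnth e i = tnth e' i.
    have sp : forall u : t.-tuple LT, \sum_(j < t) tnth a j * tnth u j
        = tnth a i * tnth u i + \sum_(j < t | j != i) tnth a j * tnth u j.
      by move=> u; rewrite (bigD1 i).
    have sr : \sum_(j < t | j != i) tnth a j * tnth e j
        = \sum_(j < t | j != i) tnth a j * tnth e' j.
      by apply: eq_bigr => j ji; rewrite off.
    apply: (mulfI ai0); apply: (addIr (\sum_(j < t | j != i) tnth a j * tnth e j)).
    by rewrite -sp (eqP se) sr -sp (eqP se').
  rewrite yy; congr (_, _); apply: eq_from_tnth => j.
  by case: (eqVneq j i) => [->|ji]; [exact: ei | exact: off].
rewrite -cD -(card_in_imset inj); apply: subset_leq_card.
apply/subsetP => u /imsetP[[e y]]; rewrite inE /= => /andP[_ h] ->; exact: h.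
Qed.

Lemma card_bigcup_le (I T : finType) (P : {set I}) (B : I -> {set T}) :
  (#|\bigcup_(i in P) B i| <= \sum_(i in P) #|B i|)%N.
Proof.
apply: (big_rec2 (fun (U : {set T}) n => #|U| <= n)%N); first by rewrite cards0.
move=> i U n _ h; apply: leq_trans (leq_card_setU (B i) U).1 _.
by rewrite leq_add2l.
Qed.

Lemma nz_tnth t (a : t.-tuple LT) : a != [tuple of nseq t 0] -> exists i, tnth a i != 0.
Proof.
move=> a0; case: (pickP (fun i => tnth a i != 0)) => [i h|h]; first by exists i.
case/eqP: a0; apply: eq_from_tnth => j; rewrite tnth_nseq.
by apply/eqP; rewrite -[_ == _]negbK h.
Qed.

Lemma good_not_bad t (c : t.-tuple F) i (v : LT) (e : t.-tuple LT) :
  v != 0 -> tnth c i != 0 -> free e ->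
  \sum_(j < t) tnth (map_tuple (fun x => x *: v) c) j * tnth e j != 0.
Proof.
move=> v0 ci fe.
under eq_bigr => j _ do rewrite tnth_map -scalerAl scalerAr.
rewrite -mulr_sumr mulf_neq0 //; apply/eqP => s0.
move/freeP: fe => h; move: (h (fun j => tnth c j)) => {}h.
move/eqP: ci; apply; apply: h.
apply: etrans _ s0; apply: eq_bigr => j _; by rewrite [tnth e j](tnth_nth 0).
Qed.

Lemma card_Tg t (X : {vspace LT}) :
  (#|[set a : t.-tuple LT | all (fun x => x \in X) a]| <= #|F| ^ (\dim X * t))%N.
Proof.
have inj : {in [set a : t.-tuple LT | all (fun x => x \in X) a] &,
   injective (fun a : t.-tuple LT => [ffun j => tnth a j])}.
  move=> a b _ _ /ffunP h; apply: eq_from_tnth => j; have := h j; by rewrite !ffunE.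
rewrite -(card_in_imset inj).
have sub : [set [ffun j => tnth a j] | a in [set a : t.-tuple LT | all (fun x => x \in X) a]]
    \subset [set f : {ffun 'I_t -> LT} | f \in ffun_on [pred x : LT | x \in X]].
  apply/subsetP => f /imsetP[a]; rewrite inE => /allP aX ->.
  rewrite inE; apply/ffun_onP => j; rewrite ffunE inE; apply: aX; exact: mem_tnth.
apply: leq_trans (subset_leq_card sub) _.
have cX : #|[pred x : LT | x \in X]| = #|X| by apply: eq_card.
by rewrite cardsE card_ffun_on card_ord expnM -card_vspace cX.
Qed.

End Helpers.

Theorem lemma1 (F : finFieldType) (L : fieldExtType F) (r d t : nat)
  (g : r.-tuple (finvect_type L)) (A : {set finvect_type L})
  (V : {vspace finvect_type L}) :
  let q := #|F| in
  let m := \dim {:finvect_type L} in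
  (0 < r)%N -> (r <= m)%N ->
  (forall x, x \in A -> x \in <<g>>%VS) ->
  (forall x, x \in V -> x \in A) ->
  (d <= \dim V)%N -> (d <= r)%N ->
  (1 <= t)%N -> (t <= m)%N ->
  bad_prob t A <=
    ((q%:Q ^+ (t * r + 1) - (q%:Q ^+ d - 1) * (q%:Q ^+ t - 1))
      / (q%:Q ^+ m.+1 - q%:Q ^+ t)).
Proof.
move=> q m r0 rm Ag VA dV dr t1 tm.
case: t t1 tm => [//|n] _ tm.
pose LT := finvect_type L.
pose S := indep_tuples L n.+1.
pose bad := [set e in S | bad_event A e].
pose Tg := [set a : n.+1.-tuple LT | all (fun x => x \in <<g>>%VS) a].
pose Good := [set map_tuple (fun x => x *: p.1) (cons_tuple 1 p.2)
               | p in setX ([set v : LT | v \in V] :\ 0) [set: n.-tuple F]].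
pose G := (Tg :\: Good) :\ [tuple of nseq n.+1 (0 : LT)].
pose K := (q ^ m - q ^ n)%N.
have hB : (#|bad| * K <= #|G| * #|S|)%N.
  have sub : bad \subset \bigcup_(a in G) Bset a.
    apply/subsetP => e; rewrite inE => /andP[eS /existsP[a /and3P[aA a0 se]]].
    apply/bigcupP; exists a; last by rewrite inE eS se.
    rewrite !inE a0 /=; apply/andP; split.
      apply/imsetP => -[[v c]]; rewrite !inE /= => /andP[/andP[v0 vV] _] ea.
      move: se; rewrite ea; apply/negP; apply: (good_not_bad (i := ord0)) => //.
        by rewrite (tnth_nth 0) /= oner_neq0.
      by move: eS; rewrite inE.
    apply/allP => x xa; apply: Ag; exact: (allP aA).
  apply: (@leq_trans (\sum_(a in G) #|Bset a| * K)%N).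
    rewrite -big_distrl /= leq_mul2r; apply/orP; right.
    apply: leq_trans (subset_leq_card sub) _; exact: card_bigcup_le.
  rewrite -sum_nat_const; apply: leq_sum => a; rewrite !inE => /andP[a0 _].
  have [i ai] := nz_tnth a0; exact: card_B ai.
have GT : Good \subset Tg.
  apply/subsetP => u /imsetP[[v c]]; rewrite !inE /= => /andP[/andP[v0 vV] _] ->.
  apply/allP => x /mapP[y _ ->]; apply: memvZ; apply: Ag; apply: VA; exact: vV.
have hG : (#|G| <= #|Tg| - #|Good|)%N.
  by rewrite (leq_trans (subset_leq_card (subD1set _ _))) // cardsD (setIidPr GT).
have hGood : #|Good| = ((q ^ \dim V - 1) * q ^ n)%N.
  rewrite card_in_imset.
    rewrite cardsX cardsT card_tuple.
    have := cardsD1 (0 : LT) [set v : LT | v \in V].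
    rewrite inE mem0v cardsE card_vspace => ->.
    by rewrite add1n subn1.
  move=> [v c] [v' c']; rewrite !inE /= => /andP[/andP[v0 vV] _] /andP[/andP[v0' vV'] _].
  move/(congr1 val) => /= [h1 h2].
  rewrite !scale1r in h1; subst v'.
  congr (_, _); apply: val_inj => /=.
  apply: inj_map h2 => x y /eqP; rewrite -subr_eq0 -scalerBl scaler_eq0 (negPf v0) orbF subr_eq0.
  by move/eqP.
have hTg : (#|Tg| <= q ^ (n.+1 * r))%N.
  apply: leq_trans (card_Tg _ _) _; rewrite mulnC leq_exp2l ?leq_mul2r.
    by rewrite leq_mul2l (leq_trans (dim_span _)) ?size_tuple ?orbT.
  exact: finNzRing_gt1.
have q1 : (1 < q)%N by exact: finNzRing_gt1.
have q0 : (0 < q)%N by apply: ltnW.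
have hS : (#|bad| <= #|S|)%N.
  by apply: subset_leq_card; apply/subsetP => e; rewrite inE => /andP[].
have hY0 : ((q ^ d - 1) * q ^ n <= #|Good|)%N.
  by rewrite hGood leq_mul2r leq_sub2r ?orbT // leq_pexp2l.
have hYX : ((q ^ d - 1) * q ^ n <= q ^ (n.+1 * r))%N.
  by apply: leq_trans hY0 (leq_trans (subset_leq_card GT) hTg).
have hmain : (#|bad| * K <= (q ^ (n.+1 * r) - (q ^ d - 1) * q ^ n) * #|S|)%N.
  apply: leq_trans hB _; rewrite leq_mul2r; apply/orP; right.
  apply: leq_trans hG _; exact: leq_sub hTg hY0.
have hnm : (q ^ n < q ^ m)%N by rewrite ltn_exp2l.
have hd1 : (1 <= q ^ d)%N by rewrite expn_gt0 q0.
change (#|bad|%:R / #|S|%:R <= (q%:R ^+ (n.+1 * r + 1)%N - (q%:R ^+ d - 1) * (q%:R ^+ n.+1 - 1))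
      / (q%:R ^+ m.+1 - q%:R ^+ n.+1) :> rat).
have rmain : (#|bad|%:R * (q%:R ^+ m - q%:R ^+ n)
   <= (q%:R ^+ (n.+1 * r) - (q%:R ^+ d - 1) * q%:R ^+ n) * #|S|%:R :> rat).
  have hK : (q ^ n <= q ^ m)%N by apply: ltnW.
  by move: hmain; rewrite /K -(ler_nat rat) !natrM !natrB ?natrM ?natrB ?natrX.
have rYX : ((q%:R ^+ d - 1) * q%:R ^+ n <= q%:R ^+ (n.+1 * r) :> rat).
  by move: hYX; rewrite -(ler_nat rat) natrM natrB ?natrX.
have rnm : (q%:R ^+ n < q%:R ^+ m :> rat) by rewrite -!natrX ltr_nat.
have rd1 : (1 <= q%:R ^+ d :> rat) by rewrite -natrX ler1n.
have rq : (1 < q%:R :> rat) by rewrite ltr1n.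
have rb : (#|bad|%:R <= #|S|%:R :> rat) by rewrite ler_nat.
have rb0 : (0 <= #|bad|%:R :> rat) by apply: ler0n.
rewrite addn1 !exprS.
set qq := (q%:R : rat) in rmain rYX rnm rd1 rq *.
set X := qq ^+ (n.+1 * r) in rmain rYX *.
set Qd := qq ^+ d in rmain rYX rd1 *.
set Qn := qq ^+ n in rmain rYX rnm *.
set Qm := qq ^+ m in rmain rnm *.
set b := (#|bad|%:R : rat) in rmain rb rb0 *.
set N := (#|S|%:R : rat) in rmain rb *.
have den : 0 < qq * Qm - qq * Qn.
  by rewrite -mulrBr mulr_gt0 ?subr_gt0 // (lt_trans ltr01 rq).
have [N0|Npos] := eqVneq N 0.
  have b0 : b = 0 by apply/le_anti; rewrite rb0 -N0 rb.
  rewrite b0 mul0r divr_ge0 ?(ltW den) //.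
  nra.
rewrite ler_pdivrMr ?lt_def ?Npos ?ler0n // mulrAC ler_pdivlMr //.
nra.
Qed.
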